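(* Let $\mathfrak g$ be a unimodular almost abelian Lie algebra with a Hermitian structure $(J,g)$, and let $e$ be an admissible frame with data $\lambda,v,A$ (so $\lambda+\operatorname{tr}A+\overline{\operatorname{tr}A}=0$). Then: (1) $s=-\lambda^2\le0$, and $s=0\iff Ric^{(1)}=0\iff\lambda=0$; (2) $\hat s=-2\lambda^2-|v|^2\le0$, and $\hat s=0\iff Ric^{(3)}=0\iff\lambda=0,\ v=0$; (3) $Ric^{(2)}=0\iff R=0\iff \lambda=0,\ v=0,\ [A,A^\ast]=0$.
   Context: Setup: Hermitian structure $(J,g)$ on a real Lie algebra $\mathfrak g$ of dimension $2n$ ($J$ integrable, $g$ a $J$-invariant inner product), viewed as left-invariant on the Lie group. $\mathfrak g^{1,0}=\{x-\sqrt{-1}Jx\}$, unitary frame $e_1,\dots,e_n$ of $\mathfrak g^{1,0}$ ($g(e_i,\bar e_j)=\delta_{ij}$, $g$ extended bilinearly), dual coframe $\varphi_i$, $d$ the Chevalley–Eilenberg differential. $\mathfrak g$ is unimodular if $\operatorname{tr}\mathrm{ad}_x=0$ for all $x$; almost abelian if non-abelian with an abelian ideal of codimension one. An admissible frame is a unitary frame with $d\varphi_1=-\lambda\,\varphi_1\wedge\bar\varphi_1$, $d\varphi_i=-\bar v_i\,\varphi_1\wedge\bar\varphi_1+\sum_{j=2}^n\overline{A_{ij}}(\varphi_1+\bar\varphi_1)\wedge\varphi_j$, $\lambda\in\mathbb R$, $v\in\mathbb C^{n-1}$, $A\in M_{n-1}(\mathbb C)$. $R$ denotes the curvature of the Chern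 connection (the unique connection preserving $J,g$ with torsion of vanishing $(1,1)$-part), $R_{i\bar jk\bar\ell}=g(R(e_i,\bar e_j)e_k,\bar e_\ell)$. Chern Ricci curvatures: $Ric^{(1)}_{i\bar j}=\sum_rR_{i\bar jr\bar r}$, $Ric^{(2)}_{i\bar j}=\sum_rR_{r\bar ri\bar j}$, $Ric^{(3)}_{i\bar j}=\sum_rR_{r\bar ji\bar r}$; Chern scalar curvature $s=\sum_iRic^{(1)}_{i\bar i}$; altered scalar curvature $\hat s=\sum_iRic^{(3)}_{i\bar i}$. *)

(* Defs.v *)
From HB Require Import structures.
From mathcomp Require Import all_boot all_order all_algebra.
From mathcomp Require Import reals.
From mathcomp.real_closed Require Import complex.
Set Implicit Arguments. Unset Strict Implicit. Unset Printing Implicit Defensive.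
Import Order.TTheory GRing.Theory Num.Theory.
Local Open Scope ring_scope.

(* Model.  A real Lie algebra g of dimension 2n with a Hermitian structure   *)
(* (J,g) and a unitary frame e_1..e_n of g^{1,0} is encoded through its      *)
(* complexification g_C = C^(2n) = 'rV[C]_(n + n), written in the basis      *)
(* (e_1,..,e_n, ebar_1,..,ebar_n): the coordinate lshift n i is the e_i      *)
(* component and rshift n i is the ebar_i component.  The real Lie algebra   *)
(* g is the set of vectors fixed by the conjugation [vconj].  J acts by      *)
(* sqrt(-1) on g^{1,0} (first block) and by -sqrt(-1) on g^{0,1} (second     *)
(* block); g is extended complex-bilinearly with g(e_i, ebar_j) = delta_ij,  *)
(* g(e_i,e_j) = g(ebar_i, ebar_j) = 0.  All tensors are left-invariant,      *)
(* hence multilinear maps on g_C.                                            *)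

Section Defs.
Variable R : realType.
Local Notation C := (R[i]).
Variable n : nat.
Local Notation V := 'rV[C]_(n + n).

Definition fr (i : 'I_n) : V := delta_mx 0 (lshift n i).
Definition frb (i : 'I_n) : V := delta_mx 0 (rshift n i).

Definition cofr (i : 'I_n) (x : V) : C := x 0 (lshift n i).
Definition cofrb (i : 'I_n) (x : V) : C := x 0 (rshift n i).

Definition vconj (x : V) : V :=
  row_mx (map_mx Num.conj (rsubmx x)) (map_mx Num.conj (lsubmx x)).
Definition is_real_vec (x : V) : Prop := vconj x = x.

Definition cxJ (x : V) : V := row_mx ('i%C *: lsubmx x) ((- 'i%C) *: rsubmx x).

Definition gC (x y : V) : C :=
  \sum_(i < n) (x 0 (lshift n i) * y 0 (rshift n i)
               + x 0 (rshift n i) * y 0 (lshift n i)).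

Definition p10 (x : V) : V := row_mx (lsubmx x) 0.
Definition p01 (x : V) : V := row_mx 0 (rsubmx x).

Definition bil (c : 'I_(n + n) -> 'I_(n + n) -> V) (x y : V) : V :=
  \sum_(k < n + n) \sum_(l < n + n) (x 0 k * y 0 l) *: c k l.

(* c : structure constants of the (complexified) bracket *)
Definition is_real_Lie_algebra (c : 'I_(n + n) -> 'I_(n + n) -> V) : Prop :=
  let br := bil c in
  [/\ (forall x y, br x y = - br y x),
      (forall x y z, br x (br y z) + br y (br z x) + br z (br x y) = 0)
    & (forall x y, vconj (br x y) = br (vconj x) (vconj y))].

Definition J_integrable (c : 'I_(n + n) -> 'I_(n + n) -> V) : Prop :=
  forall x y, p01 (bil c (p10 x) (p10 y)) = 0.

Definition tr_ad (c : 'I_(n + n) -> 'I_(n + n) -> V) (x : V) : C :=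
  \sum_(k < n + n) (bil c x (delta_mx 0 k)) 0 k.

Definition unimodular (c : 'I_(n + n) -> 'I_(n + n) -> V) : Prop :=
  forall x, is_real_vec x -> tr_ad c x = 0.

(* almost abelian: g is non-abelian and has an abelian ideal h of real
   codimension one.  h is written as the kernel (in g) of a nonzero real
   linear functional f : g -> R, i.e. of a complex-linear functional
   x |-> (x *m w) 0 0 on g_C which is real (commutes with conjugation). *)
Definition almost_abelian (c : 'I_(n + n) -> 'I_(n + n) -> V) : Prop :=
  let br := bil c in
  (exists x y, [/\ is_real_vec x, is_real_vec y & br x y <> 0]) /\
  exists w : 'cV[C]_(n + n),
    let f := fun x : V => (x *m w) 0 0 in
    [/\ w <> 0,
        (forall x, f (vconj x) = (f x)^*),
        (forall x y, is_real_vec x -> is_real_vec y -> f y = 0 ->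
            f (br x y) = 0)
      & (forall y z, is_real_vec y -> is_real_vec z -> f y = 0 -> f z = 0 ->
            br y z = 0)].

Definition dCE (c : 'I_(n + n) -> 'I_(n + n) -> V) (a : V -> C) (x y : V) : C :=
  - a (bil c x y).
Definition wedge (a b : V -> C) (x y : V) : C := a x * b y - a y * b x.

(* connection (left-invariant, complexified): Gam gives nabla on basis *)
Definition torsion (c Gam : 'I_(n + n) -> 'I_(n + n) -> V) (x y : V) : V :=
  bil Gam x y - bil Gam y x - bil c x y.

Definition part11 (T : V -> V -> V) (x y : V) : V :=
  T (p10 x) (p01 y) + T (p01 x) (p10 y).

Definition is_Chern (c Gam : 'I_(n + n) -> 'I_(n + n) -> V) : Prop :=
  let nab := bil Gam in
  [/\ (forall x y, vconj (nab x y) = nab (vconj x) (vconj y)),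
      (forall x y, nab x (cxJ y) = cxJ (nab x y)),
      (forall x y z, gC (nab x y) z + gC y (nab x z) = 0)
    & (forall x y, part11 (torsion c Gam) x y = 0)].

Definition curv (c Gam : 'I_(n + n) -> 'I_(n + n) -> V) (x y z : V) : V :=
  bil Gam x (bil Gam y z) - bil Gam y (bil Gam x z) - bil Gam (bil c x y) z.

Definition Rc (c Gam : 'I_(n + n) -> 'I_(n + n) -> V) (i j k l : 'I_n) : C :=
  gC (curv c Gam (fr i) (frb j) (fr k)) (frb l).

Definition Ric1 c Gam (i j : 'I_n) : C := \sum_(r < n) Rc c Gam i j r r.
Definition Ric2 c Gam (i j : 'I_n) : C := \sum_(r < n) Rc c Gam r r i j.
Definition Ric3 c Gam (i j : 'I_n) : C := \sum_(r < n) Rc c Gam r j i r.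
Definition scal c Gam : C := \sum_(i < n) Ric1 c Gam i i.
Definition scal_hat c Gam : C := \sum_(i < n) Ric3 c Gam i i.

End Defs.

(* admissible frame with data lam, v, A, for complex dimension n = m.+1;
   index ord0 is e_1 and lift ord0 j is e_{j+2} *)
Definition admissible (R : realType) (m : nat)
    (c : 'I_(m.+1 + m.+1) -> 'I_(m.+1 + m.+1) -> 'rV[R[i]]_(m.+1 + m.+1))
    (lam : R) (v : 'rV[R[i]]_m) (A : 'M[R[i]]_m) : Prop :=
  let phi1 := cofr (@ord0 m) in
  let phib1 := cofrb (@ord0 m) in
  (forall x y, dCE c phi1 x y = - (lam%:C)%C * wedge phi1 phib1 x y) /\
  (forall (i : 'I_m) x y,
     dCE c (cofr (lift ord0 i)) x y =
       - (v 0 i)^* * wedge phi1 phib1 x y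
       + \sum_(j < m) (A i j)^* *
           wedge (fun z => phi1 z + phib1 z) (cofr (lift ord0 j)) x y).

Definition adjmx (R : realType) (m : nat) (A : 'M[R[i]]_m) : 'M[R[i]]_m :=
  map_mx Num.conj A^T.

(* Main.v *)
Require Import Defs.
From HB Require Import structures.
From mathcomp Require Import all_boot all_order all_algebra.
From mathcomp Require Import reals.
From mathcomp.real_closed Require Import complex.
From mathcomp Require Import ring lra.
Import Order.TTheory GRing.Theory Num.Theory.
Local Open Scope ring_scope.
Set Implicit Arguments. Unset Strict Implicit. Unset Printing Implicit Defensive.

Section L7.
Variable R : realType.
Local Notation C := (R[i]).
Variable m : nat.
Local Notation n := m.+1.
Local Notation N := (m.+1 + m.+1).
Local Notation V := 'rV[C]_N.

Implicit Types (T : 'I_N -> 'I_N -> V) (x y z : V).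
Definition E (k : 'I_N) : V := locked (delta_mx 0 k).
Lemma EE k p : E k 0 p = (k == p)%:R.
Proof. by rewrite /E -lock mxE eqxx eq_sym. Qed.

Lemma mxDE (x y : V) p : (x + y) 0 p = x 0 p + y 0 p. Proof. by rewrite !mxE. Qed.
Lemma mxBE (x y : V) p : (x - y) 0 p = x 0 p - y 0 p. Proof. by rewrite !mxE. Qed.
Lemma mxNE (x : V) p : (- x) 0 p = - x 0 p. Proof. by rewrite !mxE. Qed.
Lemma mxZE s (x : V) p : (s *: x) 0 p = s * x 0 p. Proof. by rewrite !mxE. Qed.
Lemma mx0E p : (0 : V) 0 p = 0. Proof. by rewrite !mxE. Qed.

Lemma sum_deltaV (F : 'I_N -> V) k : \sum_i ((k == i)%:R : C) *: F i = F k.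
Proof.
rewrite (bigD1 k) //= eqxx scale1r big1 ?addr0 //; move=> i Hi.
by rewrite eq_sym (negbTE Hi) scale0r.
Qed.
Lemma sum_deltaC (I : finType) (F : I -> C) k : \sum_i ((k == i)%:R : C) * F i = F k.
Proof.
rewrite (bigD1 k) //= eqxx mul1r big1 ?addr0 //; move=> i Hi.
by rewrite eq_sym (negbTE Hi) mul0r.
Qed.
Lemma sum_deltaC' (I : finType) (F : I -> C) k : \sum_i F i * ((i == k)%:R : C) = F k.
Proof.
rewrite (bigD1 k) //= eqxx mulr1 big1 ?addr0 //; move=> i Hi.
by rewrite (negbTE Hi) mulr0.
Qed.

Lemma bilE T k l : bil T (E k) (E l) = T k l.
Proof.
rewrite /bil -[RHS](sum_deltaV (fun k' => T k' l) k); apply: eq_bigr => k' _.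
rewrite EE -[in RHS](sum_deltaV (fun l' => T k' l') l) scaler_sumr.
by apply: eq_bigr => l' _; rewrite EE scalerA.
Qed.

Lemma bilZr T x s y : bil T x (s *: y) = s *: bil T x y.
Proof.
rewrite /bil scaler_sumr; apply: eq_bigr => k _; rewrite scaler_sumr.
by apply: eq_bigr => l _; rewrite mxE scalerA mulrCA.
Qed.
Lemma bilDl T x x' y : bil T (x + x') y = bil T x y + bil T x' y.
Proof.
rewrite /bil -big_split; apply: eq_bigr => k _; rewrite -big_split.
by apply: eq_bigr => l _; rewrite mxE mulrDl scalerDl.
Qed.
Lemma bil0l T y : bil T 0 y = 0.
Proof.
rewrite /bil big1 // => k _; rewrite big1 // => l _; by rewrite mxE mul0r scale0r.
Qed.

Lemma bil_exp T x y : bil T x y = \sum_k \sum_l (x 0 k * y 0 l) *: bil T (E k) (E l).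
Proof. by apply: eq_bigr => k _; apply: eq_bigr => l _; rewrite bilE. Qed.


Local Notation l_ a := (lshift n a).
Local Notation r_ a := (rshift n a).
Local Notation cj := (@Num.conj C).

Lemma vconj_l x q : vconj x 0 (l_ q) = cj (x 0 (r_ q)).
Proof. by rewrite /vconj row_mxEl !mxE. Qed.
Lemma vconj_r x q : vconj x 0 (r_ q) = cj (x 0 (l_ q)).
Proof. by rewrite /vconj row_mxEr !mxE. Qed.
Lemma cxJ_l x q : cxJ x 0 (l_ q) = 'i%C * x 0 (l_ q).
Proof. by rewrite /cxJ row_mxEl !mxE. Qed.
Lemma cxJ_r x q : cxJ x 0 (r_ q) = - 'i%C * x 0 (r_ q).
Proof. by rewrite /cxJ row_mxEr !mxE. Qed.
Lemma p10_l x q : p10 x 0 (l_ q) = x 0 (l_ q).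
Proof. by rewrite /p10 row_mxEl !mxE. Qed.
Lemma p10_r x q : p10 x 0 (r_ q) = 0.
Proof. by rewrite /p10 row_mxEr !mxE. Qed.
Lemma p01_l x q : p01 x 0 (l_ q) = 0.
Proof. by rewrite /p01 row_mxEl !mxE. Qed.
Lemma p01_r x q : p01 x 0 (r_ q) = x 0 (r_ q).
Proof. by rewrite /p01 row_mxEr !mxE. Qed.

Ltac splitp p := let p' := fresh "p" in case: (split_ordP p) => p' ->.

Lemma vconjEl q : vconj (E (l_ q)) = E (r_ q).
Proof.
apply/rowP => p; splitp p; rewrite ?vconj_l ?vconj_r !EE ?eq_lrshift ?eq_rlshift
  ?eq_lshift ?eq_rshift ?rmorph_nat //.
Qed.
Lemma vconjEr q : vconj (E (r_ q)) = E (l_ q).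
Proof.
apply/rowP => p; splitp p; rewrite ?vconj_l ?vconj_r !EE ?eq_lrshift ?eq_rlshift
  ?eq_lshift ?eq_rshift ?rmorph_nat //.
Qed.
Lemma vconjD x y : vconj (x + y) = vconj x + vconj y.
Proof.
apply/rowP => p; splitp p; rewrite [in RHS]mxE ?vconj_l ?vconj_r [(x+y) 0 _]mxE rmorphD //.
Qed.
Lemma cxJEl q : cxJ (E (l_ q)) = 'i%C *: E (l_ q).
Proof.
apply/rowP => p; splitp p; rewrite ?cxJ_l ?cxJ_r [in RHS]mxE //.
by rewrite !EE eq_lrshift !mulr0.
Qed.
Lemma cxJEr q : cxJ (E (r_ q)) = - 'i%C *: E (r_ q).
Proof.
apply/rowP => p; splitp p; rewrite ?cxJ_l ?cxJ_r [in RHS]mxE //.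
by rewrite !EE eq_rlshift !mulr0.
Qed.
Lemma p10El q : p10 (E (l_ q)) = E (l_ q).
Proof. apply/rowP => p; splitp p; rewrite ?p10_l ?p10_r // EE eq_lrshift //. Qed.
Lemma p01El q : p01 (E (l_ q)) = 0.
Proof. apply/rowP => p; splitp p; rewrite ?p01_l ?p01_r [in RHS]mxE // EE eq_lrshift //. Qed.
Lemma p10Er q : p10 (E (r_ q)) = 0.
Proof. apply/rowP => p; splitp p; rewrite ?p10_l ?p10_r [in RHS]mxE // EE eq_rlshift //. Qed.
Lemma p01Er q : p01 (E (r_ q)) = E (r_ q).
Proof. apply/rowP => p; splitp p; rewrite ?p01_l ?p01_r // EE eq_rlshift //. Qed.

Lemma gC_Er x q : gC x (E (r_ q)) = x 0 (l_ q).
Proof.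
rewrite /gC -[RHS](sum_deltaC' (fun i => x 0 (l_ i)) q); apply: eq_bigr => i _.
by rewrite !EE eq_rlshift eq_rshift mulr0 addr0 eq_sym.
Qed.
Lemma gC_El x q : gC x (E (l_ q)) = x 0 (r_ q).
Proof.
rewrite /gC -[RHS](sum_deltaC' (fun i => x 0 (r_ i)) q); apply: eq_bigr => i _.
by rewrite !EE eq_lrshift eq_lshift mulr0 add0r eq_sym.
Qed.
Lemma gC_lE x q : gC (E (l_ q)) x = x 0 (r_ q).
Proof.
rewrite /gC -[RHS](sum_deltaC (fun i => x 0 (r_ i)) q); apply: eq_bigr => i _.
by rewrite !EE eq_lrshift eq_lshift mul0r addr0.
Qed.
Lemma gC_rE x q : gC (E (r_ q)) x = x 0 (l_ q).
Proof.
rewrite /gC -[RHS](sum_deltaC (fun i => x 0 (l_ i)) q); apply: eq_bigr => i _.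
by rewrite !EE eq_rlshift eq_rshift mul0r add0r.
Qed.


Variables (c Gam : 'I_N -> 'I_N -> V) (lam : R) (v : 'rV[C]_m) (A : 'M[C]_m).
Hypothesis HLie : is_real_Lie_algebra c.
Hypothesis Hadm : admissible c lam v A.
Hypothesis HCh : is_Chern c Gam.
Hypothesis Huni : unimodular c.

Local Notation L := ((lam%:C)%C : C).
Local Notation l0 := (l_ (@ord0 m)).
Local Notation r0 := (r_ (@ord0 m)).
Definition Wf x y : C := x 0 l0 * y 0 r0 - y 0 l0 * x 0 r0.

Definition Mf (p q : 'I_n) : C :=
  match unlift ord0 p, unlift ord0 q with
  | None, None => L
  | None, Some _ => 0
  | Some i, None => v 0 i
  | Some i, Some j => A i j end.
Definition Mm : 'M[C]_n := locked (\matrix_(p, q) Mf p q).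
Lemma Mm00 : Mm ord0 ord0 = L.
Proof. by rewrite /Mm -lock mxE /Mf unlift_none. Qed.
Lemma Mm0l j : Mm ord0 (lift ord0 j) = 0.
Proof. by rewrite /Mm -lock mxE /Mf unlift_none liftK. Qed.
Lemma Mml0 i : Mm (lift ord0 i) ord0 = v 0 i.
Proof. by rewrite /Mm -lock mxE /Mf unlift_none liftK. Qed.
Lemma Mmll i j : Mm (lift ord0 i) (lift ord0 j) = A i j.
Proof. by rewrite /Mm -lock mxE /Mf !liftK. Qed.

Lemma conjL : cj L = L.
Proof. exact: conjc_real. Qed.

Lemma cjM (a b : C) : cj (a * b) = cj a * cj b. Proof. exact: rmorphM. Qed.
Lemma cjB (a b : C) : cj (a - b) = cj a - cj b. Proof. exact: rmorphB. Qed.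
Lemma cjD (a b : C) : cj (a + b) = cj a + cj b. Proof. exact: rmorphD. Qed.
Lemma cjN (a : C) : cj (- a) = - cj a. Proof. exact: rmorphN. Qed.
Lemma cjn k : cj (k%:R) = k%:R. Proof. exact: rmorph_nat. Qed.
Lemma cj0 : cj 0 = 0. Proof. exact: rmorph0. Qed.
Lemma cjK (a : C) : cj (cj a) = a. Proof. exact: conjCK. Qed.
Lemma cjsum (I : finType) (F : I -> C) : cj (\sum_i F i) = \sum_i cj (F i).
Proof. exact: rmorph_sum. Qed.

Lemma c_anti k l : c k l = - c l k.
Proof. by case: HLie => H _ _; rewrite -!bilE H. Qed.
Lemma c_real x y : vconj (bil c x y) = bil c (vconj x) (vconj y).
Proof. by case: HLie. Qed.
Lemma cR_lr a b : vconj (c (l_ a) (r_ b)) = c (r_ a) (l_ b).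
Proof. by rewrite -!bilE c_real vconjEl vconjEr. Qed.
Lemma cR_ll a b : vconj (c (l_ a) (l_ b)) = c (r_ a) (r_ b).
Proof. by rewrite -!bilE c_real !vconjEl. Qed.

Lemma adm1 x y : bil c x y 0 l0 = L * Wf x y.
Proof.
case: Hadm => H _; move: (H x y); rewrite /dCE /wedge /cofr /cofrb => /eqP.
by rewrite mulNr eqr_opp => /eqP.
Qed.
Lemma adm2 x y i : bil c x y 0 (l_ (lift ord0 i)) = cj (v 0 i) * Wf x y
  - \sum_(j < m) cj (A i j) * ((x 0 l0 + x 0 r0) * y 0 (l_ (lift ord0 j))
                                - (y 0 l0 + y 0 r0) * x 0 (l_ (lift ord0 j))).
Proof.
case: Hadm => _ H; move: (H i x y); rewrite /dCE /wedge /cofr /cofrb.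
move/(congr1 (fun t => - t)); rewrite opprK => ->.
by rewrite mulNr opprD opprK.
Qed.
Lemma adm1' x y : bil c x y 0 r0 = - L * Wf x y.
Proof.
have := congr1 (fun w : V => w 0 l0) (c_real x y); rewrite /= vconj_l adm1.
move/(congr1 cj); rewrite cjK => ->.
rewrite cjM conjL /Wf !vconj_l !vconj_r cjB !cjM !cjK.
ring.
Qed.


Lemma liftne0 k : (lift (@ord0 m) k == ord0) = false.
Proof. by apply/negbTE; rewrite eq_sym neq_lift. Qed.
Lemma ne0lift k : (ord0 == lift (@ord0 m) k) = false.
Proof. by apply/negbTE; rewrite neq_lift. Qed.
Lemma eq_lift0 k j : (lift (@ord0 m) k == lift ord0 j) = (k == j).
Proof. exact: (inj_eq (@lift_inj _ ord0)). Qed.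

Ltac simpE := rewrite ?EE ?eq_lshift ?eq_rshift ?eq_lrshift ?eq_rlshift ?liftne0 ?ne0lift
   ?eq_lift0 ?eqxx /= ?mulr1n ?mulr0n.

Lemma C1 a b p : c (l_ a) (r_ b) 0 (l_ p) = (b == ord0)%:R * cj (Mm p a).
Proof.
rewrite -bilE; case: (unliftP ord0 p) => [i ->|->].
  rewrite adm2 /Wf; simpE.
  case: (unliftP ord0 a) => [k ->|->]; simpE.
    rewrite Mmll (eq_bigr (fun j => (cj (A i j) * - ((b == ord0)%:R : C)) * (j == k)%:R)).
      by rewrite sum_deltaC'; ring.
    by move=> j _; simpE; rewrite [k == j]eq_sym; ring.
  rewrite Mml0 big1; first by ring.
  by move=> j _; simpE; ring.
rewrite adm1 /Wf; simpE.
case: (unliftP ord0 a) => [k ->|->]; simpE.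
  by rewrite Mm0l cj0; ring.
by rewrite Mm00 conjL; ring.
Qed.

Lemma ckk k : c k k = 0.
Proof.
apply/rowP => p; have := congr1 (fun w : V => w 0 p) (c_anti k k).
rewrite /= [in X in _ = X -> _]mxE => /eqP; rewrite -addr_eq0 -mulr2n mulrn_eq0 /= => /eqP ->.
by rewrite mxE.
Qed.

Lemma C2 b : c l0 (l_ b) 0 (l_ b) = - cj (Mm b b) + (b == ord0)%:R * L.
Proof.
case: (unliftP ord0 b) => [j ->|->].
  rewrite -bilE adm2 /Wf; simpE.
  rewrite Mmll (eq_bigr (fun j' => cj (A j j') * (j' == j)%:R)).
    by rewrite sum_deltaC'; ring.
  by move=> j' _; simpE; rewrite [j == j']eq_sym; ring.
by rewrite ckk Mm00 conjL eqxx mulr1n mxE; ring.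
Qed.


Lemma t2i : ('i%C + 'i%C : C) != 0.
Proof. apply/eqP => /(congr1 (@complex.Im R)) /=. lra. Qed.

Lemma GJ_lr k a q : Gam k (l_ a) 0 (r_ q) = 0.
Proof.
case: HCh => _ HJ _ _; have := congr1 (fun w : V => w 0 (r_ q)) (HJ (E k) (E (l_ a))).
rewrite /= cxJEl bilZr bilE cxJ_r mxE => /eqP; rewrite -subr_eq0 -mulrBl opprK mulf_eq0.
by rewrite (negbTE t2i) => /eqP.
Qed.
Lemma GJ_rl k a q : Gam k (r_ a) 0 (l_ q) = 0.
Proof.
case: HCh => _ HJ _ _; have := congr1 (fun w : V => w 0 (l_ q)) (HJ (E k) (E (r_ a))).
rewrite /= cxJEr bilZr bilE cxJ_l mxE => /eqP; rewrite -subr_eq0 -mulrBl -opprD mulf_eq0.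
by rewrite oppr_eq0 (negbTE t2i) => /eqP.
Qed.

Lemma G_tor a b : Gam (l_ a) (r_ b) - Gam (r_ b) (l_ a) = c (l_ a) (r_ b).
Proof.
case: HCh => _ _ _ HT; have := HT (E (l_ a)) (E (r_ b)).
rewrite /part11 p10El p01Er p01El p10Er /torsion !bilE !bil0l !subr0 addr0.
by move/eqP; rewrite subr_eq0 => /eqP.
Qed.
Lemma G_met k l q : gC (Gam k l) (E q) + gC (E l) (Gam k q) = 0.
Proof. by case: HCh => _ _ H _; rewrite -!bilE H. Qed.
Lemma G_real a b : vconj (Gam (l_ a) (l_ b)) = Gam (r_ a) (r_ b).
Proof. by case: HCh => H _ _ _; rewrite -!bilE H !vconjEl. Qed.

Lemma c_lr_r a b p : c (l_ a) (r_ b) 0 (r_ p) = - (a == ord0)%:R * Mm p b.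
Proof.
rewrite c_anti mxE -cR_lr vconj_r C1 cjM cjK cjn; ring.
Qed.
Lemma Glr a b p : Gam (l_ a) (r_ b) 0 (r_ p) = - (a == ord0)%:R * Mm p b.
Proof.
have := congr1 (fun w : V => w 0 (r_ p)) (G_tor a b).
by rewrite /= mxBE GJ_lr subr0 c_lr_r.
Qed.
Lemma Grl a b p : Gam (r_ a) (l_ b) 0 (l_ p) = - (a == ord0)%:R * cj (Mm p b).
Proof.
have := congr1 (fun w : V => w 0 (l_ p)) (G_tor b a).
rewrite /= mxBE GJ_rl sub0r C1 => /(congr1 (fun t => - t)).
by rewrite opprK => ->; ring.
Qed.
Lemma Gll a b p : Gam (l_ a) (l_ b) 0 (l_ p) = (a == ord0)%:R * Mm b p.
Proof.
have := G_met (l_ a) (l_ b) (r_ p); rewrite gC_Er gC_lE Glr => /eqP.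
by rewrite addr_eq0 => /eqP ->; ring.
Qed.
Lemma Grr a b p : Gam (r_ a) (r_ b) 0 (r_ p) = (a == ord0)%:R * cj (Mm b p).
Proof. by rewrite -G_real vconj_r Gll cjM cjn. Qed.


Definition cM : 'M[C]_n := map_mx cj Mm.
Definition Pm : 'M[C]_N := block_mx Mm 0 0 (- Mm^T).
Definition Qm : 'M[C]_N := block_mx (- adjmx Mm) 0 0 cM.
Definition Nab x y : V := x 0 l0 *: (y *m Pm) + x 0 r0 *: (y *m Qm).

Lemma EmulE l (X : 'M[C]_N) p : (E l *m X) 0 p = X l p.
Proof. by rewrite /E -lock -rowE mxE. Qed.

Lemma NabEE k l p : Nab (E k) (E l) 0 p = (k == l0)%:R * Pm l p + (k == r0)%:R * Qm l p.
Proof. by rewrite /Nab mxDE !mxZE !EmulE !EE. Qed.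

Lemma GamE k l : Gam k l = Nab (E k) (E l).
Proof.
apply/rowP => p; rewrite NabEE /Pm /Qm.
splitp k; splitp l; splitp p;
  rewrite ?block_mxEul ?block_mxEur ?block_mxEdl ?block_mxEdr ?mxE;
  rewrite ?GJ_lr ?GJ_rl ?Gll ?Glr ?Grl ?Grr; simpE; try ring.
Qed.


Lemma mulE (y : V) (X : 'M[C]_N) p : (y *m X) 0 p = \sum_l y 0 l * X l p.
Proof. by rewrite mxE. Qed.

Lemma GamNab x y : bil Gam x y = Nab x y.
Proof.
apply/rowP => p; rewrite bil_exp summxE.
rewrite /Nab mxDE !mxZE !mulE.
rewrite (eq_bigr (fun k => x 0 k * (\sum_l y 0 l * Pm l p) * (k == l0)%:R
                       + x 0 k * (\sum_l y 0 l * Qm l p) * (k == r0)%:R)).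
  by rewrite big_split /= !sum_deltaC'.
move=> k _; rewrite summxE.
rewrite (eq_bigr (fun l => x 0 k * (k == l0)%:R * (y 0 l * Pm l p)
                       + x 0 k * (k == r0)%:R * (y 0 l * Qm l p))).
  by rewrite big_split /= -!mulr_sumr; ring.
by move=> l _; rewrite mxZE bilE GamE NabEE; ring.
Qed.


Definition Kb : 'M[C]_N := Qm *m Pm - Pm *m Qm - L *: (Pm - Qm).

Lemma curvE x y z : curv c Gam x y z = Wf x y *: (z *m Kb).
Proof.
rewrite /curv !GamNab /Nab adm1 adm1' /Kb.
rewrite !mulmxDl -!scalemxAl -!mulmxA !mulmxBr -scalemxAr mulmxBr.
move: (z *m (Pm *m Pm)) (z *m (Pm *m Qm)) (z *m (Qm *m Pm)) (z *m (Qm *m Qm))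
      (z *m Pm) (z *m Qm) => u1 u2 u3 u4 u5 u6.
apply/rowP => p; rewrite !(mxDE, mxBE, mxZE, mxNE) /Wf; ring.
Qed.


Definition K : 'M[C]_n := (- adjmx Mm) *m Mm - Mm *m (- adjmx Mm) - L *: (Mm - (- adjmx Mm)).
Definition K2 : 'M[C]_n := cM *m (- Mm^T) - (- Mm^T) *m cM - L *: (- Mm^T - cM).

Lemma KbE : Kb = block_mx K 0 0 K2.
Proof.
rewrite /Kb /Pm /Qm !mulmx_block !mulmx0 !mul0mx !addr0 !add0r.
rewrite !opp_block_mx !add_block_mx scale_block_mx opp_block_mx add_block_mx.
by rewrite !subrr scaler0 subrr.
Qed.

Lemma KE k l : K k l = \sum_p Mm k p * cj (Mm l p) - \sum_p cj (Mm p k) * Mm p l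
   - L * (Mm k l + cj (Mm l k)).
Proof.
rewrite /K !mxE; under eq_bigr do rewrite !mxE mulNr.
under [X in _ - X - _]eq_bigr do rewrite !mxE mulrN.
rewrite !sumrN; ring.
Qed.

Lemma K2E : K2 = - K^T.
Proof.
apply/matrixP => k l; have -> : (- K^T) k l = - K l k by rewrite !mxE.
rewrite KE /K2 !mxE.
under eq_bigr do rewrite !mxE mulrN.
under [\sum_j (- Mm^T) k j * cM j l]eq_bigr do rewrite !mxE mulNr.
rewrite !sumrN.
under [X in _ = - (X - _ - _)]eq_bigr do rewrite mulrC.
under [X in _ = - (_ - X - _)]eq_bigr do rewrite mulrC.
ring.
Qed.


Lemma frE i : fr R i = E (l_ i). Proof. by rewrite /E -lock. Qed.
Lemma frbE i : frb R i = E (r_ i). Proof. by rewrite /E -lock. Qed.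

Lemma RcE i j k l : Rc c Gam i j k l = (i == ord0)%:R * (j == ord0)%:R * K k l.
Proof.
rewrite /Rc !frE !frbE gC_Er curvE mxZE EmulE KbE block_mxEul /Wf; simpE; ring.
Qed.

Lemma sum0 (F : 'I_n -> C) : \sum_i (i == ord0)%:R * F i = F ord0.
Proof. by rewrite -(sum_deltaC F ord0); apply: eq_bigr => i _; rewrite eq_sym. Qed.

Lemma Ric1E i j : Ric1 c Gam i j = (i == ord0)%:R * (j == ord0)%:R * \tr K.
Proof. by rewrite /Ric1 /mxtrace mulr_sumr; apply: eq_bigr => r _; rewrite RcE. Qed.
Lemma scalE : scal c Gam = \tr K.
Proof.
rewrite /scal (eq_bigr (fun i => (i == ord0)%:R * ((i == ord0)%:R * \tr K))).
  by rewrite sum0 eqxx mul1r.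
by move=> i _; rewrite Ric1E mulrA.
Qed.
Lemma Ric2E i j : Ric2 c Gam i j = K i j.
Proof.
rewrite /Ric2 (eq_bigr (fun r => (r == ord0)%:R * ((r == ord0)%:R * K i j))).
  by rewrite sum0 eqxx mul1r.
by move=> r _; rewrite RcE mulrA.
Qed.
Lemma Ric3E i j : Ric3 c Gam i j = (j == ord0)%:R * K i ord0.
Proof.
rewrite /Ric3 (eq_bigr (fun r => (r == ord0)%:R * ((j == ord0)%:R * K i r))).
  by rewrite sum0.
by move=> r _; rewrite RcE mulrA.
Qed.
Lemma scalhE : scal_hat c Gam = K ord0 ord0.
Proof.
rewrite /scal_hat (eq_bigr (fun i => (i == ord0)%:R * K i ord0)).
  by rewrite sum0.
by move=> i _; rewrite Ric3E.
Qed.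


Lemma cr0lb b : c r0 (l_ b) 0 (l_ b) = - cj (Mm b b).
Proof. by rewrite c_anti mxNE C1 eqxx mul1r. Qed.
Lemma cl0rb b : c l0 (r_ b) 0 (r_ b) = - Mm b b.
Proof. by rewrite c_lr_r eqxx /= mulr1n; ring. Qed.
Lemma cr0rb b : c r0 (r_ b) 0 (r_ b) = - Mm b b + (b == ord0)%:R * L.
Proof. by rewrite -cR_ll vconj_r C2 cjD cjN cjK cjM cjn conjL. Qed.

Lemma deltaE k : delta_mx 0 k = E k. Proof. by rewrite /E -lock. Qed.

Lemma trM : \tr Mm + cj (\tr Mm) = L.
Proof.
have HR : is_real_vec (E l0 + E r0) by rewrite /is_real_vec vconjD vconjEl vconjEr addrC.
have := Huni HR; rewrite /tr_ad big_split_ord /=; under eq_bigr do rewrite deltaE.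
under [X in _ + X]eq_bigr do rewrite deltaE.
rewrite (eq_bigr (fun b => (b == ord0)%:R * L - 2 * cj (Mm b b))); last first.
  by move=> b _; rewrite bilDl mxDE !bilE C2 cr0lb; ring.
rewrite [X in _ + X](eq_bigr (fun b => (b == ord0)%:R * L - 2 * Mm b b)); last first.
  by move=> b _; rewrite bilDl mxDE !bilE cl0rb cr0rb; ring.
rewrite !sumrB !sum0 -!mulr_sumr /mxtrace cjsum => H.
have : 2 * (L - (\sum_i Mm i i + \sum_i cj (Mm i i))) =
   L - 2 * \sum_i cj (Mm i i) + (L - 2 * \sum_i Mm i i) by ring.
rewrite H => /eqP; rewrite mulf_eq0 pnatr_eq0 /= subr_eq0 => /eqP ->.
by [].
Qed.

Lemma trK : \tr K = - L ^+ 2.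
Proof.
rewrite /mxtrace (eq_bigr (fun k => \sum_p Mm k p * cj (Mm k p) - \sum_p cj (Mm p k) * Mm p k
   - L * (Mm k k + cj (Mm k k)))); last by move=> k _; rewrite KE.
rewrite !sumrB exchange_big /=.
under [X in _ - X - _]eq_bigr do under eq_bigr do rewrite mulrC.
rewrite subrr sub0r -mulr_sumr big_split /= -cjsum.
by rewrite -/(\tr Mm) trM; ring.
Qed.


Lemma K00 : K ord0 ord0 = - (2 * L ^+ 2 + \sum_(j < m) `|v 0 j| ^+ 2).
Proof.
rewrite KE !big_ord_recl Mm00 conjL.
under eq_bigr do rewrite Mm0l mul0r.
rewrite big1_eq.
under eq_bigr do rewrite Mml0.
under [\sum_(j < m) `|v 0 j| ^+ 2]eq_bigr do rewrite normCK mulrC.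
ring.
Qed.

Lemma Mcol0 : lam = 0 -> v = 0 -> forall p, Mm p ord0 = 0.
Proof.
move=> hl hv p; case: (unliftP ord0 p) => [i ->|->].
  by rewrite Mml0 hv mxE.
by rewrite Mm00 hl rmorph0.
Qed.
Lemma Mrow0 : lam = 0 -> forall p, Mm ord0 p = 0.
Proof.
move=> hl p; case: (unliftP ord0 p) => [i ->|->].
  by rewrite Mm0l.
by rewrite Mm00 hl rmorph0.
Qed.

Lemma Ki0 : lam = 0 -> v = 0 -> forall i, K i ord0 = 0.
Proof.
move=> hl hv i; rewrite KE !big1 ?Mcol0 ?Mrow0 // ?cj0 ?hl ?rmorph0; first by ring.
  by move=> p _; rewrite Mcol0 // mulr0.
by move=> p _; rewrite Mrow0 // cj0 mulr0.
Qed.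
Lemma K0j : lam = 0 -> v = 0 -> forall j, K ord0 j = 0.
Proof.
move=> hl hv j; rewrite KE !big1 ?Mcol0 ?Mrow0 // ?cj0 ?hl ?rmorph0; first by ring.
  by move=> p _; rewrite Mcol0 // cj0 mul0r.
by move=> p _; rewrite Mrow0 // mul0r.
Qed.
Lemma Kll : lam = 0 -> v = 0 -> forall i j,
  K (lift ord0 i) (lift ord0 j) = (A *m adjmx A - adjmx A *m A) i j.
Proof.
move=> hl hv i j; rewrite KE !big_ord_recl !Mcol0 // !Mrow0 // Mmll hl !mul0r !mulr0 !add0r.
rewrite subr0.
under eq_bigr do rewrite !Mmll.
under [X in _ - X]eq_bigr do rewrite !Mmll.
rewrite [RHS]mxE [X in _ = _ + X]mxE !mxE.
by congr (_ - _); apply: eq_bigr => k _; rewrite !mxE.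
Qed.


Lemma L2E : L ^+ 2 = ((lam ^+ 2)%:C)%C.
Proof. by rewrite rmorphXn. Qed.
Lemma L2ge0 : 0 <= L ^+ 2.
Proof. by rewrite L2E ler0c sqr_ge0. Qed.
Lemma Lz : L = 0 -> lam = 0.
Proof. by move/(congr1 (@complex.Re R)). Qed.
Lemma L2z : L ^+ 2 = 0 -> lam = 0.
Proof. by move/eqP; rewrite sqrf_eq0 => /eqP /Lz. Qed.
Lemma Sge0 : 0 <= \sum_(j < m) `|v 0 j| ^+ 2.
Proof. by apply: sumr_ge0 => j _; rewrite exprn_ge0. Qed.

Lemma K00z : K ord0 ord0 = 0 <-> lam = 0 /\ v = 0.
Proof.
split.
  rewrite K00 => /eqP; rewrite oppr_eq0 (paddr_eq0 (mulr_ge0 (ler0n _ 2) L2ge0) Sge0).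
  case/andP; rewrite mulf_eq0 pnatr_eq0 /= => /eqP/L2z hl /eqP hs.
  split=> //; apply/rowP => j; rewrite mxE.
  have := psumr_eq0P (fun j _ => exprn_ge0 2 (normr_ge0 (v 0 j))) hs (i := j) isT.
  by move/eqP; rewrite sqrf_eq0 normr_eq0 => /eqP.
case=> hl hv; rewrite K00 big1; first by rewrite hl rmorph0 expr0n /= mulr0 addr0 oppr0.
by move=> j _; rewrite hv mxE normr0 expr0n.
Qed.

Lemma gC0 y : gC 0 y = 0.
Proof. by rewrite /gC big1 // => k _; rewrite !mx0E !mul0r addr0. Qed.

Lemma Kz_curv : K = 0 -> forall x y z, curv c Gam x y z = 0.
Proof.
move=> HK x y z; rewrite curvE KbE K2E HK trmx0 oppr0 block_mx0 mulmx0 scaler0 //.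
Qed.
Lemma curv_K : (forall x y z, curv c Gam x y z = 0) -> K = 0.
Proof.
move=> H; apply/matrixP => i j; rewrite -Ric2E mxE /Ric2 big1 // => r _.
by rewrite /Rc H gC0.
Qed.

Lemma main :
  [/\ scal c Gam = - L ^+ 2, scal c Gam <= 0,
      (scal c Gam = 0 <-> (forall i j, Ric1 c Gam i j = 0))
    & ((forall i j, Ric1 c Gam i j = 0) <-> lam = 0)] /\
  [/\ scal_hat c Gam = - (2 * L ^+ 2 + \sum_(j < m) `|v 0 j| ^+ 2),
      scal_hat c Gam <= 0,
      (scal_hat c Gam = 0 <-> (forall i j, Ric3 c Gam i j = 0))
    & ((forall i j, Ric3 c Gam i j = 0) <-> lam = 0 /\ v = 0)] /\
  ((forall i j, Ric2 c Gam i j = 0) <->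
     (forall x y z, curv c Gam x y z = 0)) /\
  ((forall x y z, curv c Gam x y z = 0) <->
     [/\ lam = 0, v = 0 & A *m adjmx A - adjmx A *m A = 0]).
Proof.
have hs : scal c Gam = - L ^+ 2 by rewrite scalE trK.
have hsh : scal_hat c Gam = - (2 * L ^+ 2 + \sum_(j < m) `|v 0 j| ^+ 2) by rewrite scalhE K00.
have R3 : (forall i j, Ric3 c Gam i j = 0) <-> lam = 0 /\ v = 0.
  split.
    by move=> H; apply/K00z; rewrite -(H ord0 ord0) Ric3E eqxx mul1r.
  by case=> hl hv i j; rewrite Ric3E Ki0 // mulr0.
have C3 : (forall x y z, curv c Gam x y z = 0) <->
     [/\ lam = 0, v = 0 & A *m adjmx A - adjmx A *m A = 0].
  split.
    move/curv_K => HK; have [hl hv] : lam = 0 /\ v = 0 by apply/K00z; rewrite HK mxE.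
    split=> //; apply/matrixP => i j; by rewrite -Kll // HK !mxE.
  case=> hl hv hc; apply: Kz_curv; apply/matrixP => k l.
  case: (unliftP ord0 k) => [i ->|->]; last by rewrite K0j // mxE.
  case: (unliftP ord0 l) => [j ->|->]; last by rewrite Ki0 // mxE.
  by rewrite Kll // hc !mxE.
split; [split|split; [split|split]].
- exact: hs.
- by rewrite hs oppr_le0 L2ge0.
- split; first by move=> H0 i j; rewrite Ric1E -scalE H0 mulr0.
  by move=> H; rewrite /scal big1 // => i _; rewrite H.
- split; first by move=> H; apply: L2z; apply/eqP; rewrite -oppr_eq0 -hs scalE -(H ord0 ord0) Ric1E eqxx !mul1r.
  by move=> hl i j; rewrite Ric1E -scalE hs hl rmorph0 expr0n oppr0 mulr0.
- exact: hsh.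
- by rewrite hsh oppr_le0 (addr_ge0 (mulr_ge0 (ler0n _ 2) L2ge0) Sge0).
- split; last by move=> H; rewrite /scal_hat big1 // => i _; rewrite H.
  by rewrite scalhE => /K00z /R3.
- exact: R3.
- split; first by move=> H; apply: Kz_curv; apply/matrixP => i j; rewrite -Ric2E H mxE.
  by move/curv_K => HK i j; rewrite Ric2E HK mxE.
- exact: C3.
Qed.

End L7.

Theorem lemma7 (R : realType) (m : nat)
    (c : 'I_(m.+1 + m.+1) -> 'I_(m.+1 + m.+1) -> 'rV[R[i]]_(m.+1 + m.+1))
    (lam : R) (v : 'rV[R[i]]_m) (A : 'M[R[i]]_m)
    (Gam : 'I_(m.+1 + m.+1) -> 'I_(m.+1 + m.+1) -> 'rV[R[i]]_(m.+1 + m.+1)) :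
  is_real_Lie_algebra c -> J_integrable c ->
  unimodular c -> almost_abelian c ->
  admissible c lam v A ->
  is_Chern c Gam ->
  (* (1) *)
  [/\ scal c Gam = - (lam%:C)%C ^+ 2, scal c Gam <= 0,
      (scal c Gam = 0 <-> (forall i j, Ric1 c Gam i j = 0))
    & ((forall i j, Ric1 c Gam i j = 0) <-> lam = 0)] /\
  (* (2) *)
  [/\ scal_hat c Gam = - (2 * (lam%:C)%C ^+ 2 + \sum_(j < m) `|v 0 j| ^+ 2),
      scal_hat c Gam <= 0,
      (scal_hat c Gam = 0 <-> (forall i j, Ric3 c Gam i j = 0))
    & ((forall i j, Ric3 c Gam i j = 0) <-> lam = 0 /\ v = 0)] /\
  (* (3) *)
  ((forall i j, Ric2 c Gam i j = 0) <->
     (forall x y z, curv c Gam x y z = 0)) /\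
  ((forall x y z, curv c Gam x y z = 0) <->
     [/\ lam = 0, v = 0 & A *m adjmx A - adjmx A *m A = 0]).
Proof.
move=> HL _ HU _ HA HC.
exact: (main HL HA HC HU).
Qed.
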